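(* Let $P\in\Delta_{\mathcal{T},\mathcal{X},\mathcal{Y}}$ and let $Q_1,Q_2\in\Delta_P$ both be maximizers of $H_Q(T\mid X,Y)$ over $Q\in\Delta_P$. Then $Q_1(T\mid X,Y)=Q_2(T\mid X,Y)$.
   Context: $T,X,Y$ are random variables with finite state spaces $\mathcal{T},\mathcal{X},\mathcal{Y}$; $\Delta_{\mathcal{T},\mathcal{X},\mathcal{Y}}$ is the set of all joint distributions on $\mathcal{T}\times\mathcal{X}\times\mathcal{Y}$. For $P\in\Delta_{\mathcal{T},\mathcal{X},\mathcal{Y}}$, $\Delta_P=\{Q\in\Delta_{\mathcal{T},\mathcal{X},\mathcal{Y}}: Q(X=x,T=t)=P(X=x,T=t),\ Q(Y=y,T=t)=P(Y=y,T=t)\ \forall x,y,t\}$. $H_Q(T\mid X,Y)$ is the conditional entropy under $Q$; equality of conditionals is understood almost everywhere. *)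

(* Defs.v *)
From mathcomp Require Import all_boot.
From Stdlib Require Import Reals.
Set Implicit Arguments. Unset Strict Implicit. Unset Printing Implicit Defensive.
Open Scope R_scope.

Definition rsum (I : finType) (f : I -> R) : R := \big[Rplus/0]_(i : I) f i.

Definition is_dist (T X Y : finType) (Q : T -> X -> Y -> R) : Prop :=
  (forall t x y, 0 <= Q t x y) /\
  rsum (fun t => rsum (fun x => rsum (fun y => Q t x y))) = 1.

Definition margXT (T X Y : finType) (Q : T -> X -> Y -> R) (x : X) (t : T) : R :=
  rsum (fun y => Q t x y).
Definition margYT (T X Y : finType) (Q : T -> X -> Y -> R) (y : Y) (t : T) : R :=
  rsum (fun x => Q t x y).
Definition margXY (T X Y : finType) (Q : T -> X -> Y -> R) (x : X) (y : Y) : R :=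
  rsum (fun t => Q t x y).

Definition in_DeltaP (T X Y : finType) (P Q : T -> X -> Y -> R) : Prop :=
  is_dist Q /\
  (forall x t, margXT Q x t = margXT P x t) /\
  (forall y t, margYT Q y t = margYT P y t).

Definition condEntropy (T X Y : finType) (Q : T -> X -> Y -> R) : R :=
  rsum (fun t => rsum (fun x => rsum (fun y =>
    if Rlt_dec 0 (Q t x y)
    then - (Q t x y * ln (Q t x y / margXY Q x y))
    else 0))).

Definition is_maximizer (T X Y : finType) (P Q : T -> X -> Y -> R) : Prop :=
  in_DeltaP P Q /\
  forall Q', in_DeltaP P Q' -> condEntropy Q' <= condEntropy Q.

(* Main.v *)
Require Import Defs.
From HB Require Import structures.
From mathcomp Require Import all_boot.
From Stdlib Require Import Reals Lra.
Open Scope R_scope.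
Lemma Rplus_assoc' : associative Rplus. Proof. by move=>*; rewrite Rplus_assoc. Qed.
Lemma Rplus_0_l' : left_id 0 Rplus. Proof. by move=>*; rewrite Rplus_0_l. Qed.
Lemma Rplus_comm' : commutative Rplus. Proof. by move=>*; rewrite Rplus_comm. Qed.
HB.instance Definition _ := Monoid.isComLaw.Build R 0 Rplus Rplus_assoc' Rplus_comm' Rplus_0_l'.
Lemma rsumD (I : finType) (f g : I -> R) : rsum (fun i => f i + g i) = rsum f + rsum g.
Proof. by rewrite /rsum big_split. Qed.
Lemma rsumZ (I : finType) c (f : I -> R) : rsum (fun i => c * f i) = c * rsum f.
Proof. rewrite /rsum. apply: (big_ind2 (fun u v => u = c * v)); [lra| by move=> ????->->; lra | by []]. Qed.
Lemma rsum_ge0 (I : finType) (f : I -> R) : (forall i, 0 <= f i) -> 0 <= rsum f.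
Proof. move=> H; rewrite /rsum; apply: (big_ind (fun u => 0 <= u)) => //; [lra| move=>*; lra]. Qed.
Lemma rsum_eq0 (I : finType) (f : I -> R) : (forall i, 0 <= f i) -> rsum f = 0 -> forall i, f i = 0.
Proof. move=> H S i; move: S; rewrite /rsum (bigD1 i) //=.
have : 0 <= \big[Rplus/0]_(j | j != i) f j by apply: (big_ind (fun u => 0 <= u)) => //; [lra| move=>*; lra].
have := H i. lra. Qed.
Lemma rsum_le (I : finType) (f : I -> R) i : (forall i, 0 <= f i) -> f i <= rsum f.
Proof. move=> H; rewrite /rsum (bigD1 i) //=.
have : 0 <= \big[Rplus/0]_(j | j != i) f j by apply: (big_ind (fun u => 0 <= u)) => //; [lra| move=>*; lra].
lra. Qed.
Lemma rsum_exch (I J : finType) (f : I -> J -> R) : rsum (fun i => rsum (fun j => f i j)) = rsum (fun j => rsum (fun i => f i j)).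
Proof. by rewrite /rsum exchange_big. Qed.
Lemma rsum_ext (I : finType) (f g : I -> R) : (forall i, f i = g i) -> rsum f = rsum g.
Proof. by move=> H; rewrite /rsum; apply: eq_bigr. Qed.
Definition h u U := if Rlt_dec 0 u then -(u*ln(u/U)) else 0.
Definition S a A m M := (if Rlt_dec 0 a then a*ln(a/A) - a*ln(m/M) else 0) - a + A*m/M.
Lemma lnineq z : 0 < z -> ln z <= z - 1 /\ (ln z = z - 1 -> z = 1).
Proof. move=> hz. have E := exp_ln z hz. split.
- have := exp_ineq1_le (ln z). lra.
- move=> Heq. destruct (Req_dec (ln z) 0) as [H0|H0].
  + rewrite -E H0 exp_0 //.
  + have := exp_ineq1 (ln z) H0. lra.
Qed.
Lemma ln_div' x y : 0 < x -> 0 < y -> ln (x / y) = ln x - ln y.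
Proof. move=> hx hy. rewrite /Rdiv ln_mult ?ln_Rinv //; try lra; by apply Rinv_0_lt_compat. Qed.
Lemma S_key a A m M : 0 < a -> a <= A -> 0 < m -> 0 < M ->
  S a A m M = a * ((m/M)/(a/A) - 1 - ln ((m/M)/(a/A))).
Proof. move=> ha hA hm hM. rewrite /S. destruct (Rlt_dec 0 a) as [ha0|]; last lra.
have hA' : 0 < A by lra.
rewrite (ln_div' (m/M) (a/A)) /=; try (apply Rdiv_lt_0_compat; lra).
field. lra. Qed.
Lemma S_ge0 a A m M : 0 <= a -> a <= A -> 0 <= A -> 0 <= m -> (0 < a -> 0 < m) -> 0 < M -> 0 <= S a A m M.
Proof. move=> ha haA hA hm hma hM.
destruct (Rlt_dec 0 a) as [ha'|ha'].
- rewrite S_key //; try (apply hma; done).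
  have hz : 0 < (m/M)/(a/A) by repeat apply Rdiv_lt_0_compat; try lra; apply hma.
  have [L _] := lnineq _ hz. apply Rmult_le_pos; lra.
- rewrite /S. destruct (Rlt_dec 0 a); first lra. rewrite /=.
  have -> : a = 0 by lra.
  have : 0 <= A * m / M by apply Rmult_le_pos; [apply Rmult_le_pos|apply Rlt_le, Rinv_0_lt_compat]; lra.
  lra.
Qed.
Lemma S_eq0 a A m M : 0 <= a -> a <= A -> 0 < A -> 0 <= m -> (0 < a -> 0 < m) -> 0 < M -> S a A m M = 0 -> a / A = m / M.
Proof. move=> ha haA hA hm hma hM H0.
destruct (Rlt_dec 0 a) as [ha'|ha'].
- move: H0; rewrite S_key //; try (apply hma; done).
  have hz : 0 < (m/M)/(a/A) by repeat apply Rdiv_lt_0_compat; try lra; apply hma.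
  have [L E] := lnineq _ hz. move=> H0.
  have : (m/M)/(a/A) - 1 - ln ((m/M)/(a/A)) = 0.
  { destruct (Rmult_integral _ _ H0); lra. }
  move=> H1. have := E ltac:(lra). move=> H2.
  have Ha : a / A <> 0 by apply Rgt_not_eq, Rdiv_lt_0_compat; lra.
  rewrite -(Rmult_1_l (a/A)) -H2. field. split; lra.
- move: H0; rewrite /S. destruct (Rlt_dec 0 a); first lra. rewrite /=.
  have -> : a = 0 by lra. move=> H0.
  have : A * m / M = 0 by lra.
  rewrite /Rdiv => H1. destruct (Rmult_integral _ _ H1) as [H2|H2].
  + destruct (Rmult_integral _ _ H2) as [H3|H3]; first lra. rewrite H3; lra.
  + have := Rinv_neq_0_compat M ltac:(lra). lra.
Qed.
Lemma pt a b A B : 0 <= a -> a <= A -> 0 <= b -> b <= B -> 0 < (A+B)/2 ->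
  2 * h ((a+b)/2) ((A+B)/2) - h a A - h b B
  + (- a + A*((a+b)/2)/((A+B)/2) - b + B*((a+b)/2)/((A+B)/2))
  = S a A ((a+b)/2) ((A+B)/2) + S b B ((a+b)/2) ((A+B)/2).
Proof. move=> ha haA hb hbB hM. rewrite /h /S.
set L := ln ((a+b)/2/((A+B)/2)).
destruct (Rlt_dec 0 ((a+b)/2)); destruct (Rlt_dec 0 a); destruct (Rlt_dec 0 b);
 rewrite /=; try (have -> : a = 0 by lra); try (have -> : b = 0 by lra); try lra.
Qed.
Lemma rsum_lin3 (I : finType) c1 c2 c3 (f g k : I -> R) :
  rsum (fun i => c1 * f i + c2 * g i + c3 * k i) = c1 * rsum f + c2 * rsum g + c3 * rsum k.
Proof. by rewrite rsumD rsumD !rsumZ. Qed.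
Lemma rsum_avg (I : finType) (f g : I -> R) : rsum (fun i => (f i + g i)/2) = (rsum f + rsum g)/2.
Proof. have := @rsum_lin3 I (/2) (/2) 0 f g g. rewrite /rsum => H.
have -> : (\big[Rplus/0]_(i : I) ((f i + g i)/2)) = \big[Rplus/0]_(i:I) (/2 * f i + /2 * g i + 0 * g i).
  apply: eq_bigr => i _; lra.
rewrite H; lra. Qed.

Theorem mainTheorem7 (T X Y : finType) (P Q1 Q2 : T -> X -> Y -> R) :
  is_dist P ->
  is_maximizer P Q1 -> is_maximizer P Q2 ->
  forall x y, 0 < margXY Q1 x y -> 0 < margXY Q2 x y ->
  forall t, Q1 t x y / margXY Q1 x y = Q2 t x y / margXY Q2 x y.
Proof.
move=> hP [hD1 hmax1] [hD2 hmax2] x0 y0 hA0 hB0 t0.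
have n1 : forall t x y, 0 <= Q1 t x y by case: hD1 => [[]].
have n2 : forall t x y, 0 <= Q2 t x y by case: hD2 => [[]].
pose Qm := fun t x y => (Q1 t x y + Q2 t x y)/2.
have mM : forall x y, margXY Qm x y = (margXY Q1 x y + margXY Q2 x y)/2.
  by move=> x y; rewrite /margXY rsum_avg.
have hDm : in_DeltaP P Qm.
  case: hD1 => [[_ s1] [mx1 my1]]; case: hD2 => [[_ s2] [mx2 my2]].
  split; [split|split].
  - move=> t x y; rewrite /Qm; have := n1 t x y; have := n2 t x y; lra.
  - rewrite /Qm.
    rewrite (@rsum_ext _ _ (fun t => (rsum (fun x => rsum (fun y => Q1 t x y)) + rsum (fun x => rsum (fun y => Q2 t x y)))/2)); last first.
      move=> t; rewrite -rsum_avg; apply: rsum_ext => x; by rewrite -rsum_avg.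
    rewrite rsum_avg s1 s2; lra.
  - move=> x t; rewrite /margXT /Qm rsum_avg.
    transitivity ((margXT Q1 x t + margXT Q2 x t)/2); first by [].
    rewrite mx1 mx2; rewrite /margXT; lra.
  - move=> y t; rewrite /margYT /Qm rsum_avg.
    transitivity ((margYT Q1 y t + margYT Q2 y t)/2); first by [].
    rewrite my1 my2; rewrite /margYT; lra.
have H12 := hmax1 Q2 hD2.
have H21 := hmax2 Q1 hD1.
have Hm1 := hmax1 Qm hDm.
pose E := fun t x y => 2 * h (Qm t x y) (margXY Qm x y) + (-1) * h (Q1 t x y) (margXY Q1 x y)
   + (-1) * h (Q2 t x y) (margXY Q2 x y).
have sE : rsum (fun t => rsum (fun x => rsum (fun y => E t x y))) =
          2 * condEntropy Qm + (-1) * condEntropy Q1 + (-1) * condEntropy Q2.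
  rewrite /condEntropy -rsum_lin3; apply: rsum_ext => t.
  rewrite -rsum_lin3; apply: rsum_ext => x.
  by rewrite -rsum_lin3.
pose corr := fun t x y => if Rlt_dec 0 (margXY Qm x y) then
   - Q1 t x y + margXY Q1 x y * Qm t x y / margXY Qm x y
   - Q2 t x y + margXY Q2 x y * Qm t x y / margXY Qm x y else 0.
have scorr : forall x y, rsum (fun t => corr t x y) = 0.
  move=> x y; rewrite /corr.
  case: (Rlt_dec 0 (margXY Qm x y)) => hM /=; last by rewrite /rsum big1.
  rewrite (@rsum_ext _ _ (fun t => (-1) * Q1 t x y + ((margXY Q1 x y + margXY Q2 x y)/ margXY Qm x y) * Qm t x y + (-1) * Q2 t x y)); last first.
    move=> t; field; lra.
  rewrite rsum_lin3 -/(margXY Q1 x y) -/(margXY Q2 x y) -/(margXY Qm x y).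
  field; lra.
pose G := fun t x y => E t x y + corr t x y.
have sG : rsum (fun x => rsum (fun y => rsum (fun t => G t x y))) =
          2 * condEntropy Qm + (-1) * condEntropy Q1 + (-1) * condEntropy Q2.
  transitivity (rsum (fun x => rsum (fun y => rsum (fun t => E t x y)))).
    apply: rsum_ext => x; apply: rsum_ext => y; rewrite /G rsumD scorr; lra.
  rewrite -sE (@rsum_exch _ _ (fun t x => rsum (fun y => E t x y))).
  apply: rsum_ext => x. by rewrite (@rsum_exch _ _ (fun t y => E t x y)).
have G0 : forall t x y, 0 <= G t x y.
  move=> t x y; rewrite /G /corr.
  have hA := @rsum_ge0 _ _ (fun t => n1 t x y). have hB := @rsum_ge0 _ _ (fun t => n2 t x y).
  have ha := n1 t x y; have hb := n2 t x y.
  have haA : Q1 t x y <= margXY Q1 x y by apply: rsum_le => i; apply n1.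
  have hbB : Q2 t x y <= margXY Q2 x y by apply: rsum_le => i; apply n2.
  rewrite /E /Qm.
  case: (Rlt_dec 0 (margXY Qm x y)) => hM /=.
  - move: hM; rewrite !mM => hM.
    have := pt _ _ _ _ ha haA hb hbB hM.
    have := S_ge0 _ _ ((Q1 t x y + Q2 t x y)/2) _ ha haA hA ltac:(lra) ltac:(lra) hM.
    have := S_ge0 _ _ ((Q1 t x y + Q2 t x y)/2) _ hb hbB hB ltac:(lra) ltac:(lra) hM.
    lra.
  - move: hM; rewrite !mM => hM.
    have a0 : Q1 t x y = 0 by rewrite /margXY in hA hB haA hbB hM *; lra.
    have b0 : Q2 t x y = 0 by rewrite /margXY in hA hB haA hbB hM *; lra.
    rewrite a0 b0 /h.
    have -> : (0 + 0)/2 = 0 by lra.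
    case: (Rlt_dec 0 0) => /= [|_]; lra.
have Z : rsum (fun x => rsum (fun y => rsum (fun t => G t x y))) = 0.
  apply Rle_antisym; first lra.
  apply: rsum_ge0 => x; apply: rsum_ge0 => y; apply: rsum_ge0 => t; exact: G0.
have Z1 := @rsum_eq0 _ _ (fun x => @rsum_ge0 _ _ (fun y => @rsum_ge0 _ _ (fun t => G0 t x y))) Z x0.
have Z2 := @rsum_eq0 _ _ (fun y => @rsum_ge0 _ _ (fun t => G0 t x0 y)) Z1 y0.
have Z3 := @rsum_eq0 _ _ (fun t => G0 t x0 y0) Z2 t0.
move: Z3; rewrite /G /corr /E /Qm.
have hM : 0 < margXY Qm x0 y0 by rewrite mM; lra.
case: (Rlt_dec 0 (margXY Qm x0 y0)) => hM' /=; last lra.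
move: hM hM'; rewrite !mM => hM _.
set a := Q1 t0 x0 y0; set b := Q2 t0 x0 y0.
have ha : 0 <= a := n1 t0 x0 y0. have hb : 0 <= b := n2 t0 x0 y0.
have haA : a <= margXY Q1 x0 y0 by apply: rsum_le => i; apply n1.
have hbB : b <= margXY Q2 x0 y0 by apply: rsum_le => i; apply n2.
have := pt _ _ _ _ ha haA hb hbB hM.
have Sa := S_ge0 _ _ ((a + b)/2) _ ha haA ltac:(lra) ltac:(lra) ltac:(lra) hM.
have Sb := S_ge0 _ _ ((a + b)/2) _ hb hbB ltac:(lra) ltac:(lra) ltac:(lra) hM.
move=> Hpt Hz.
have ea := S_eq0 _ _ ((a + b)/2) _ ha haA hA0 ltac:(lra) ltac:(lra) hM ltac:(lra).
have eb := S_eq0 _ _ ((a + b)/2) _ hb hbB hB0 ltac:(lra) ltac:(lra) hM ltac:(lra).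
by rewrite ea eb.
Qed.
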